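(* For every natural number $m$, $$s(m)=\left|\{\sigma\in S_\infty:\ \mathcal{LF}_2(\sigma)=m\}\right|.$$
   Context: $S_n$ is the group of permutations of $[n]=\{1,\dots,n\}$. For $\sigma\in S_n$ and $i\in[n]$, $c_i(\sigma)=|\{j\in[n]: j>i,\ \sigma(j)<\sigma(i)\}|$, $k_i(\sigma)=c_{n-i}(\sigma)$ for $i=0,\dots,n-1$, and $\mathcal{LF}_2(\sigma)=\sum_{i=0}^{n-1}[2^i-2^{i-k_i(\sigma)}]$. Let $\iota_n:S_n\to S_{n+1}$, $\iota_n(\sigma)=(1,\sigma(1)+1,\dots,\sigma(n)+1)$; it preserves $\mathcal{LF}_2$. Here $S_\infty$ is the direct limit of $(S_n,\iota_n)_{n\ge1}$ (which is isomorphic to the group of finitely supported permutations of the positive integers), and $\mathcal{LF}_2$ is the induced function on $S_\infty$. For $m>0$ and $k\ge0$, $S_k(m)$ is the set of all sequences $((m_1,l_1),\dots,(m_t,l_t))$, $t\ge1$, of pairs of natural numbers with $k=m_1>m_2>\dots>m_t\ge0$, $m_j\ge l_j\ge0$, and $m=\sum_{j=1}^t\sum_{p=0}^{l_j}2^{m_j-p}$; $s_k(m)=|S_k(m)|$ (nonzero for only finitely many $k$), $s(m)=\sum_{k=0}^\infty s_k(m)$ for $m>0$, and $s(0)=1$. *)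

(* Defs.v *)
From HB Require Import structures.
From mathcomp Require Import all_boot all_order all_fingroup.
From mathcomp Require Import finmap.
From mathcomp Require Import boolp classical_sets cardinality fsbigop.

Set Implicit Arguments.
Unset Strict Implicit.
Unset Printing Implicit Defensive.

(* Indices: a permutation of [n] = {1..n} is a sigma : 'S_n acting on
   {0..n-1}; position i (1-based) is the ordinal i-1.  Order on values
   is preserved by this shift, so inversion counts are unchanged. *)

Definition cinv {n} (s : 'S_n) (i : 'I_n) : nat :=
  #|[set j : 'I_n | (i < j) && (s j < s i)]|.

(* k_i(sigma) = c_{n-i}(sigma), i = 0..n-1; the 1-based position n-i is the
   0-based ordinal n-1-i = rev_ord i. *)
Definition kinv {n} (s : 'S_n) (i : 'I_n) : nat := cinv s (rev_ord i).

(* LF_2(sigma) = sum_{i=0}^{n-1} (2^i - 2^(i - k_i(sigma)));  k_i <= i so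
   the truncated subtractions are exact. *)
Definition LF2 {n} (s : 'S_n) : nat :=
  \sum_(i < n) (2 ^ i - 2 ^ (i - kinv s i)).

(* iota_n(sigma) = (1, sigma(1)+1, ..., sigma(n)+1): fixes the first point
   and shifts everything else up by one. *)
Definition iota_S {n} (s : 'S_n) : 'S_n.+1 := lift_perm ord0 ord0 s.

Fixpoint iota_iter (k n : nat) (s : 'S_n) : 'S_(k + n) :=
  match k return 'S_(k + n) with
  | 0 => s
  | k'.+1 => iota_S (iota_iter k' s)
  end.

Definition pfun {n} (s : 'S_n) (i : nat) : nat :=
  oapp (fun j : 'I_n => nat_of_ord (s j)) i (insub i).

(* Direct limit of (S_n, iota_n)_{n>=1}: pairs (n, sigma) with n >= 1,
   modulo the identification of sigma with its iterated images. *)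
Definition Sigma := {n : nat & 'S_n}.

Definition dl_rel (x y : Sigma) : Prop :=
  exists k l, k + tag x = l + tag y /\
    pfun (iota_iter k (tagged x)) =1 pfun (iota_iter l (tagged y)).

Definition dl_class (x : Sigma) : set Sigma := [set y | 0 < tag y /\ dl_rel x y].

Definition Sinf : set (set Sigma) := [set dl_class x | x in [set x | 0 < tag x]].

(* { sigma in S_infinity : LF_2(sigma) = m } (LF_2 on S_infinity being the
   function induced by LF_2 on representatives) *)
Definition Sinf_LF (m : nat) : set (set Sigma) :=
  [set dl_class x | x in [set x : Sigma | 0 < tag x /\ LF2 (tagged x) = m]].

Definition Sk (k m : nat) : set (seq (nat * nat)) :=
  [set q | [/\ q <> [::], (head (0, 0) q).1 = k,
     sorted (fun a b : nat * nat => b.1 < a.1) q,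
     all (fun p : nat * nat => p.2 <= p.1) q &
     m = \sum_(p <- q) \sum_(0 <= r < p.2.+1) 2 ^ (p.1 - r)]].

Definition sk (k m : nat) : nat := #|` fset_set (Sk k m) |%fset.

Definition s (m : nat) : nat :=
  if m == 0 then 1 else \big[addn/0]_(k \in [set: nat]) sk k m.

(* Main.v *)
Require Import Defs.
From mathcomp Require Import all_boot all_fingroup.
From mathcomp Require Import boolp classical_sets cardinality.
From HB Require Import structures.
From mathcomp Require Import all_order zify.
From mathcomp Require Import finmap.
From mathcomp Require Import fsbigop.
Set Implicit Arguments.
Unset Strict Implicit.
Unset Printing Implicit Defensive.

Lemma lift_ltn n (h : 'I_n.+1) (x y : 'I_n) : (lift h x < lift h y) = (x < y).
Proof. rewrite /= /bump; case: (leqP h x); case: (leqP h y); lia. Qed.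

Lemma card_lt_ord N (a : nat) : a <= N -> #|[set v : 'I_N | v < a]| = a.
Proof.
move=> aN.
have -> : [set v : 'I_N | v < a] = widen_ord aN @: [set: 'I_a].
  apply/setP=> v; rewrite !inE; apply/idP/imsetP.
    by move=> va; exists (Ordinal va); rewrite ?inE //; apply: val_inj.
  by case=> w _ ->; rewrite /= ltn_ord.
by rewrite card_imset ?cardsT ?card_ord //; by move=> x y /(congr1 val) /= /val_inj.
Qed.

Lemma cinv_lift0 n (a : 'I_n.+1) (t : 'S_n) :
  cinv (lift_perm ord0 a t) ord0 = a.
Proof.
rewrite /cinv lift_perm_id.
set s := lift_perm ord0 a t.
have -> : [set j : 'I_n.+1 | (@ord0 n < j) && (s j < a)] = (s^-1)%g @: [set v : 'I_n.+1 | v < a].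
  apply/setP=> j; rewrite !inE; apply/idP/imsetP.
    case/andP=> _ sj; exists (s j); rewrite ?inE // permK //.
  case=> v; rewrite inE => va ->; rewrite permKV va andbT lt0n.
  apply/negP => /eqP h.
  have : s ((s^-1)%g v) = s ord0 by congr (s _); apply: val_inj.
  by rewrite permKV /s lift_perm_id => e; rewrite e ltnn in va.
by rewrite card_imset ?card_lt_ord //; [apply: ltnW; apply: ltn_ord | apply: perm_inj].
Qed.

Lemma cinv_lift n (a : 'I_n.+1) (t : 'S_n) (i : 'I_n) :
  cinv (lift_perm ord0 a t) (lift ord0 i) = cinv t i.
Proof.
rewrite /cinv.
have -> : [set j : 'I_n.+1 | (lift ord0 i < j) && (lift_perm ord0 a t j < lift_perm ord0 a t (lift ord0 i))]
   = lift ord0 @: [set j : 'I_n | (i < j) && (t j < t i)].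
  apply/setP=> j; rewrite !inE; apply/idP/imsetP.
    case: (unliftP ord0 j) => [j'|] ->; last by rewrite ltn0.
    rewrite !lift_perm_lift !lift_ltn => h; exists j' => //; rewrite inE; exact: h.
  case=> j'; rewrite inE => h ->; rewrite !lift_perm_lift !lift_ltn //.
by rewrite card_imset //; apply: lift_inj.
Qed.

Definition Kf {n} (s : 'S_n) (j : nat) : nat :=
  oapp (fun i : 'I_n => kinv s i) 0 (insub j).

Lemma Kf_ge n (s : 'S_n) j : n <= j -> Kf s j = 0.
Proof. by move=> h; rewrite /Kf insubF // ltnNge h. Qed.

Lemma Kf_lt n (s : 'S_n) j (h : j < n) : Kf s j = cinv s (rev_ord (Ordinal h)).
Proof. by rewrite /Kf insubT. Qed.

Lemma Kf_lift n (a : 'I_n.+1) (t : 'S_n) j :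
  Kf (lift_perm ord0 a t) j = if j < n then Kf t j else if j == n then val a else 0.
Proof.
case: (ltnP j n) => hjn.
  have hj1 : j < n.+1 by apply: ltnW.
  rewrite (Kf_lt _ hj1) (Kf_lt _ hjn) -(cinv_lift a); congr cinv; apply: val_inj => /=.
  rewrite /bump /=; lia.
case: eqP => [->|hne].
  rewrite (Kf_lt _ (ltnSn n)).
  have -> : rev_ord (Ordinal (ltnSn n)) = ord0 by apply: val_inj => /=; rewrite subnn.
  by rewrite cinv_lift0.
by rewrite Kf_ge //; lia.
Qed.

Lemma perm_decomp n (s : 'S_n.+1) : exists a t, s = lift_perm ord0 a t.
Proof.
pose tf (k : 'I_n) := odflt k (unlift (s ord0) (s (lift ord0 k))).
have tfP k : lift (s ord0) (tf k) = s (lift ord0 k).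
  rewrite /tf; case: (unliftP (s ord0) (s (lift ord0 k))) => [u ->|] //=.
  move/perm_inj => /eqP; by rewrite eq_sym (negbTE (neq_lift _ _)).
have tf_inj : injective tf.
  by move=> x y e; apply: (@lift_inj _ ord0); apply: (@perm_inj _ s); rewrite -!tfP e.
exists (s ord0), (perm tf_inj); apply/permP => i.
case: (unliftP ord0 i) => [k|] ->.
  by rewrite lift_perm_lift permE tfP.
by rewrite lift_perm_id.
Qed.

Lemma Kf_le n (s : 'S_n) j : Kf s j <= j.
Proof.
elim: n s j => [|n IH] s j; first by rewrite Kf_ge.
have [a [t ->]] := perm_decomp s.
rewrite Kf_lift; case: ifP => _; first exact: IH.
case: eqP => [->|_] //; exact: (ltn_ord a).
Qed.

Lemma Kf_inj n (s s' : 'S_n) : Kf s =1 Kf s' -> s = s'.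
Proof.
elim: n s s' => [|n IH] s s' h.
  by apply/permP => i; case: i.
have [a [t es]] := perm_decomp s.
have [a' [t' es']] := perm_decomp s'.
subst s s'.
have ea : a = a'.
  by have := h n; rewrite !Kf_lift ltnn eqxx => /val_inj.
have et : t = t'.
  apply: IH => j; case: (ltnP j n) => hj.
    by have := h j; rewrite !Kf_lift hj.
  by rewrite !Kf_ge.
by rewrite ea et.
Qed.

Lemma Kf_surj n (K : nat -> nat) : (forall j, K j <= j) -> (forall j, n <= j -> K j = 0) ->
  exists s : 'S_n, Kf s =1 K.
Proof.
elim: n K => [|n IH] K hle hge.
  by exists 1%g => j; rewrite Kf_ge // hge.
have h1 : forall j, (if j < n then K j else 0) <= j by move=> j; case: ifP.
have h2 : forall j, n <= j -> (if j < n then K j else 0) = 0.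
  by move=> j hj; rewrite ltnNge hj.
have [t ht] := IH _ h1 h2.
have hKn : K n < n.+1 by rewrite ltnS.
exists (lift_perm ord0 (Ordinal hKn) t) => j.
rewrite Kf_lift ht; case: (ltnP j n) => hj //; case: (j =P n) => [->|hne] //.
rewrite hge //; lia.
Qed.

Lemma Kf_iotaS n (s : 'S_n) : Kf (iota_S s) =1 Kf s.
Proof.
move=> j; rewrite /iota_S Kf_lift; case: (ltnP j n) => hj //.
by rewrite Kf_ge ?if_same.
Qed.

Lemma Kf_iter k n (s : 'S_n) : Kf (iota_iter k s) =1 Kf s.
Proof. by elim: k => [|k IH] j //=; rewrite Kf_iotaS IH. Qed.

Lemma Kf_pfun N N' (s : 'S_N) (s' : 'S_N') : N = N' ->
  (pfun s =1 pfun s' <-> Kf s =1 Kf s').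
Proof.
move=> e; subst N'; split => h.
  have -> : s = s'; last by [].
  apply/permP => i; apply: val_inj; have := h (val i).
  by rewrite /pfun valK.
by rewrite (Kf_inj h).
Qed.

Fixpoint PL (K : nat -> nat) (N : nat) : seq (nat * nat) :=
  match N with
  | 0 => [::]
  | N'.+1 => if K N' == 0 then PL K N' else (N'.-1, (K N').-1) :: PL K N'
  end.

Definition Rd := fun a b : nat * nat => b.1 < a.1.
Definition sumq (q : seq (nat * nat)) : nat :=
  \sum_(p <- q) \sum_(0 <= r < p.2.+1) 2 ^ (p.1 - r).

Lemma PL_ext K K' N : (forall j, j < N -> K j = K' j) -> PL K N = PL K' N.
Proof.
elim: N => [|N IH] h //=.
rewrite h // IH // => j hj; apply: h; exact: ltnW.
Qed.

Lemma PL_zero K N k : (forall j, N <= j -> K j = 0) -> PL K (k + N) = PL K N.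
Proof.
move=> h; elim: k => [|k IH] //=.
by rewrite h ?leq_addl // eqxx.
Qed.

Lemma PL_mem K N (a b : nat) : K 0 = 0 -> (a, b) \in PL K N -> a.+2 <= N.
Proof.
move=> h0; elim: N => [|N IH] //=.
case: eqP => hK; first by move/IH => ?; lia.
rewrite inE => /orP[/eqP [-> _]|/IH ?]; last lia.
case: N IH hK => [|N] _ /=; first by rewrite h0.
by [].
Qed.

Lemma Rd_trans : transitive Rd.
Proof. by move=> a b c; rewrite /Rd => h1 h2; apply: ltn_trans h1. Qed.

Lemma PL_sorted K N : K 0 = 0 -> sorted Rd (PL K N).
Proof.
move=> h0; elim: N => [|N IH] //=.
case: eqP => hK //.
rewrite /= path_sortedE; last exact: Rd_trans.
rewrite IH andbT; apply/allP => -[a b] /(PL_mem h0) /=.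
case: N {IH} hK => [|N] /=; first by rewrite h0.
by rewrite /Rd /=; lia.
Qed.

Lemma PL_all K N : (forall j, K j <= j) -> all (fun p : nat * nat => p.2 <= p.1) (PL K N).
Proof.
move=> hle; elim: N => [|N IH] //=.
case: eqP => hK //=; rewrite IH andbT.
have := hle N; lia.
Qed.

Lemma geom i k : k <= i -> \sum_(0 <= r < k) 2 ^ (i.-1 - r) = 2 ^ i - 2 ^ (i - k).
Proof.
elim: k => [|k IH] hk; first by rewrite big_geq // subn0 subnn.
rewrite big_nat_recr //= IH; last exact: ltnW.
have e1 : i - k = (i.-1 - k).+1 by lia.
have e2 : i - k.+1 = i.-1 - k by lia.
rewrite e1 e2 expnS.
have : 2 ^ (i.-1 - k).+1 <= 2 ^ i by rewrite leq_exp2l //; lia.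
rewrite expnS; lia.
Qed.

Lemma PL_sum K N : (forall j, K j <= j) ->
  sumq (PL K N) = \sum_(i < N) (2 ^ i - 2 ^ (i - K i)).
Proof.
move=> hle; elim: N => [|N IH]; first by rewrite big_ord0 /sumq big_nil.
rewrite big_ord_recr /= -IH.
case: eqP => hK; first by rewrite hK subn0 subnn addn0.
rewrite /sumq big_cons -/(sumq _) addnC; congr (_ + _).
have hN := hle N.
have -> : (K N).-1.+1 = K N by lia.
exact: geom.
Qed.

Lemma PL_head_neq K K' N : K 0 = 0 -> K' 0 = 0 -> K N != 0 -> K' N = 0 ->
  PL K N.+1 <> PL K' N.+1.
Proof.
move=> h0 h0' hK hK' /=; rewrite hK' eqxx (negbTE hK) => e.
have : (N.-1, (K N).-1) \in PL K' N by rewrite -e mem_head.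
move/(PL_mem h0'); case: N hK {e} hK' => [|N]; first by rewrite h0 eqxx.
move=> _ _ /=; lia.
Qed.

Lemma PL_inj K K' N : K 0 = 0 -> K' 0 = 0 -> PL K N = PL K' N ->
  forall j, j < N -> K j = K' j.
Proof.
move=> h0 h0'; elim: N => [|N IH] // e j hj.
have [hK|hK] := eqVneq (K N) 0; have [hK'|hK'] := eqVneq (K' N) 0.
- move: e => /=; rewrite hK hK' eqxx => e.
  case: (ltnP j N) => hjN; first exact: IH.
  have -> : j = N by lia.
  by rewrite hK hK'.
- by have := PL_head_neq h0' h0 hK' hK; rewrite e.
- by have := PL_head_neq h0 h0' hK hK'.
- move: e => /=; rewrite (negbTE hK) (negbTE hK') => -[e1 e2].
  case: (ltnP j N) => hjN; first exact: IH.
  have -> : j = N by lia.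
  move: hK hK' e1; rewrite !neq_ltn !ltn0 /=; lia.
Qed.

Fixpoint Kq (q : seq (nat * nat)) (j : nat) : nat :=
  match q with
  | [::] => 0
  | p :: q' => if j == p.1.+1 then p.2.+1 else Kq q' j
  end.

Lemma Kq_le q j : all (fun p : nat * nat => p.2 <= p.1) q -> Kq q j <= j.
Proof.
elim: q => [|p q IH] //= /andP[hp hq].
case: eqP => [->|_]; last exact: IH.
by rewrite ltnS.
Qed.

Lemma Kq_big q N j : all (fun p : nat * nat => p.1.+2 <= N) q -> N <= j -> Kq q j = 0.
Proof.
move=> + hj; elim: q => [|p q IH] //= /andP[hp hq].
case: eqP => [e|_]; last exact: IH.
lia.
Qed.

Lemma PL_Kq q N : sorted Rd q -> all (fun p : nat * nat => p.2 <= p.1) q ->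
  all (fun p : nat * nat => p.1.+2 <= N) q -> PL (Kq q) N = q.
Proof.
elim: q N => [|p q IH] N hs hv hb.
  by elim: N {hs hv hb} => //= N ->.
move: hs; rewrite /= path_sortedE; last exact: Rd_trans.
case/andP=> hpq hsq.
move: hv => /= /andP[hp hvq].
move: hb => /= /andP[hpN hbq].
have hbig : forall j, p.1.+2 <= j -> Kq (p :: q) j = 0.
  move=> j hj; apply: (@Kq_big _ p.1.+2) => //=.
  rewrite leqnn /=; apply/allP => x /(allP hpq); rewrite /Rd => h.
  by rewrite !ltnS; apply: ltnW.
rewrite -(subnK hpN) PL_zero //.
have -> : PL (Kq (p :: q)) p.1.+2 = p :: PL (Kq (p :: q)) p.1.+1.
  by rewrite [LHS]/= eqxx /=; case: p {hpq hbig hpN hp}.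
congr (_ :: _).
rewrite (_ : PL _ p.1.+1 = PL (Kq q) p.1.+1).
  rewrite IH //.
apply: PL_ext => j hj; rewrite /=.
by case: eqP => // e; lia.
Qed.

Definition bnd (q : seq (nat * nat)) := foldr (fun p acc => maxn p.1.+2 acc) 1 q.

Lemma bnd_all q : all (fun p : nat * nat => p.1.+2 <= bnd q) q.
Proof.
elim: q => [|p q IH] //=; rewrite leq_maxl /=.
apply/allP => x hx; have := allP IH x hx.
move=> h; apply: leq_trans h _; exact: leq_maxr.
Qed.

Lemma bnd_gt0 q : 0 < bnd q.
Proof. by elim: q => [|p q IH] //=; rewrite leq_max IH orbT. Qed.

Local Open Scope classical_set_scope.

Definition Fx (x : Sigma) : seq (nat * nat) := PL (Kf (tagged x)) (tag x).

Lemma Kf0 n (s : 'S_n) : Kf s 0 = 0.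
Proof. by have := Kf_le s 0; rewrite leqn0 => /eqP. Qed.

Lemma PL_congr K K' N N' : N = N' -> K =1 K' -> PL K N = PL K' N'.
Proof. by move=> -> h; apply: PL_ext => j _. Qed.

Lemma Fx_iter k n (s : 'S_n) : PL (Kf (iota_iter k s)) (k + n) = PL (Kf s) n.
Proof.
rewrite (@PL_congr _ (Kf s) _ (k + n)) //; last exact: Kf_iter.
by rewrite PL_zero // => j hj; rewrite Kf_ge.
Qed.

Lemma dl_Fx x y : dl_rel x y -> Fx x = Fx y.
Proof.
case: x => n s; case: y => n' s' [k [l [/= e h]]].
rewrite /Fx /= -(Fx_iter k s) -(Fx_iter l s').
apply: PL_congr => // j.
exact: (proj1 (Kf_pfun _ _ e) h j).
Qed.

Lemma Fx_dl x y : Fx x = Fx y -> dl_rel x y.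
Proof.
case: x => n s; case: y => n' s'; rewrite /Fx /= => e.
exists n', n; split; first by rewrite /= addnC.
rewrite /=; apply/(Kf_pfun _ _ (addnC n' n)) => j.
rewrite !Kf_iter.
case: (ltnP j (n' + n)) => hj; last first.
  by rewrite !Kf_ge //; apply: leq_trans hj; rewrite ?leq_addl ?leq_addr.
apply: (@PL_inj _ _ (n' + n)) => //; try exact: Kf0.
rewrite PL_zero; last by move=> i hi; rewrite Kf_ge.
rewrite e addnC PL_zero // => i hi; rewrite Kf_ge //.
Qed.

Lemma Fx_sum x : sumq (Fx x) = LF2 (tagged x).
Proof.
case: x => n s; rewrite /Fx /= PL_sum; last exact: Kf_le.
by apply: eq_bigr => i _; rewrite /Kf valK.
Qed.

Lemma Fx_sorted x : sorted Rd (Fx x).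
Proof. exact/PL_sorted/Kf0. Qed.

Lemma Fx_all x : all (fun p : nat * nat => p.2 <= p.1) (Fx x).
Proof. exact/PL_all/Kf_le. Qed.

Lemma Fx_surj q : sorted Rd q -> all (fun p : nat * nat => p.2 <= p.1) q ->
  exists x, 0 < tag x /\ Fx x = q.
Proof.
move=> hs hv.
have [s hs'] := @Kf_surj (bnd q) (Kq q) (fun j => Kq_le j hv)
  (fun j hj => Kq_big (bnd_all q) hj).
exists (Tagged (fun n => 'S_n) s); split; first exact: bnd_gt0.
rewrite /Fx /= (@PL_congr _ (Kq q) _ (bnd q)) //.
exact: PL_Kq (bnd_all q).
Qed.

Local Open Scope classical_set_scope.

Definition Q (m : nat) : set (seq (nat * nat)) :=
  [set q | [/\ sorted Rd q, all (fun p : nat * nat => p.2 <= p.1) q & m = sumq q]].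

Definition G (q : seq (nat * nat)) : set Sigma := [set y | 0 < tag y /\ Fx y = q].

Lemma dl_class_G x : dl_class x = G (Fx x).
Proof.
apply/seteqP; split => y /=.
  by case=> hy /dl_Fx ->.
by case=> hy e; split => //; apply: Fx_dl.
Qed.

Lemma Sinf_G m : Sinf_LF m = G @` Q m.
Proof.
apply/seteqP; split => z.
  case=> x [hx hL] <-; rewrite dl_class_G; exists (Fx x) => //.
  split; [exact: Fx_sorted | exact: Fx_all | by rewrite Fx_sum].
case=> q [hs hv hm] <-.
have [x [hx e]] := Fx_surj hs hv.
exists x; first by split => //; rewrite -Fx_sum e.
by rewrite dl_class_G e.
Qed.

Lemma G_inj m : {in Q m &, injective G}.
Proof.
move=> q1 q2; rewrite !in_setE => -[hs hv _] _ e.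
have [x [hx ex]] := Fx_surj hs hv.
have : G q1 x by split.
by rewrite e => -[_ <-].
Qed.

Lemma Sinf_Q m : (Sinf_LF m #= Q m)%card.
Proof. by rewrite Sinf_G; apply: inj_card_eq; apply: G_inj. Qed.

Local Open Scope classical_set_scope.

Lemma mem_sumq p q : p \in q -> 2 ^ p.1 <= sumq q.
Proof.
elim: q => [|a q IH] //; rewrite inE => /orP[/eqP ->|/IH h].
  by rewrite /sumq big_cons big_nat_recl // subn0 -addnA leq_addr.
by rewrite /sumq big_cons -/(sumq q); apply: leq_trans h _; rewrite leq_addl.
Qed.

Definition Qb (B : nat) : set (seq (nat * nat)) :=
  [set q | [/\ sorted Rd q, all (fun p : nat * nat => p.2 <= p.1) q &
               all (fun p : nat * nat => p.1 < B) q]].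

Lemma Qb_finite B : finite_set (Qb B).
Proof.
elim: B => [|B IH].
  apply: (@sub_finite_set _ _ [set [::]]); last exact: finite_set1.
  by move=> q [_ _]; case: q => [|p q] //= /andP[].
apply: (@sub_finite_set _ _ (Qb B `|` \bigcup_(l in `I_B.+1) (cons (B, l)) @` Qb B)).
  move=> q [hs hv hb]; case: q hs hv hb => [|p q] hs hv hb.
    by left; split.
  move: hs; rewrite /= path_sortedE; last exact: Rd_trans.
  case/andP => hpq hsq; move: hv hb => /= /andP[hp hvq] /andP[hpB hbq].
  have hq : all (fun p' : nat * nat => p'.1 < p.1) q.
    by apply/allP => x /(allP hpq).
  case: (ltnP p.1 B) => hpB'.
    left; split => //=; first by rewrite path_sortedE ?hpq ?hsq //; exact: Rd_trans.
      by rewrite hp hvq.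
    rewrite hpB' /=; apply/allP => x /(allP hq) h; exact: ltn_trans h hpB'.
  have ep : p.1 = B by lia.
  right; exists p.2; first by rewrite /=; lia.
  exists q; last by case: p {hpq hp hpB hq hpB'} ep => a b /= ->.
  split => //; apply/allP => x /(allP hq); rewrite ep.
  by [].
rewrite finite_setU; split => //.
apply: bigcup_finite; first exact: finite_II.
by move=> l _; apply: finite_image.
Qed.

Lemma Q_Qb m : Q m `<=` Qb m.
Proof.
move=> q [hs hv hm]; split => //; apply/allP => p hp.
have := mem_sumq hp; rewrite -hm => h.
apply: leq_trans h; exact: ltn_expl.
Qed.

Lemma Q_finite m : finite_set (Q m).
Proof. exact: sub_finite_set (@Q_Qb m) (Qb_finite m). Qed.

Lemma Sk_Q k m : Sk k m `<=` Q m.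
Proof. by move=> q [_ _ hs hv hm]; split. Qed.

Lemma Sk_big k m : m <= k -> Sk k m = set0.
Proof.
move=> hk; apply/seteqP; split => // q [hne hh _ _ hm].
case: q hne hh hm => [|p q] // _ /= hh hm.
have := @mem_sumq p (p :: q) (mem_head _ _); rewrite /sumq -hm hh => h.
have := ltn_expl k (isT : 1 < 2); lia.
Qed.

Lemma Q0 : Q 0 = [set [::]].
Proof.
apply/seteqP; split => q.
  case: q => [|p q] // [_ _ hm].
  have := @mem_sumq p (p :: q) (mem_head _ _); rewrite -hm.
  by rewrite leqn0 expn_eq0.
by move=> ->; split => //; rewrite /sumq big_nil.
Qed.

Local Open Scope classical_set_scope.

Lemma s_sum m : m != 0 -> s m = \sum_(k < m) sk k m.
Proof.
move=> hm; rewrite /s (negbTE hm) (@fsbig_ord nat 0 addn m (fun k => sk k m)).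
apply/esym; apply: fsbig_widen; first by [].
move=> k [_ hk] /=.
rewrite /sk Sk_big ?fset_set0 ?cardfs0 //.
by move: hk => /= /negP; rewrite -leqNgt.
Qed.

Lemma Sk_triv m : trivIset [set: nat] (fun k => Sk k m).
Proof.
by move=> i j _ _ [q [[_ hi _ _ _] [_ hj _ _ _]]]; rewrite -hi -hj.
Qed.

Lemma bigSk m : 0 < m -> \big[setU/set0]_(k < m) Sk k m = Q m.
Proof.
move=> hm; rewrite -(bigcup_mkord m (fun k => Sk k m)); apply/seteqP; split.
  by move=> q [k _]; apply: Sk_Q.
move=> q [hs hv he]; case: q hs hv he => [|p q] hs hv he.
  by move: he hm; rewrite /sumq big_nil => ->.
exists p.1.
  have := @mem_sumq p (p :: q) (mem_head _ _); rewrite -he => h.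
  change (p.1 < m); exact: leq_trans (ltn_expl _ (isT : 1 < 2)) h.
by split.
Qed.

Lemma Q_card m : (Q m #= `I_(s m))%card.
Proof.
case: m => [|m]; first by rewrite Q0 /s /=; exact: card_set1.
have fin := Q_finite m.+1.
rewrite -(fset_setK fin); apply/card_eq_fsetP.
rewrite s_sum // /sk.
rewrite (@trivIset_sum_card _ (fun k => Sk k m.+1) m.+1).
- by rewrite bigSk.
- by move=> k; apply: sub_finite_set (@Sk_Q k m.+1) (Q_finite _).
- exact: Sk_triv.
Qed.

Theorem theorem4p5 (m : nat) : (Sinf_LF m #= `I_(s m))%card.
Proof. exact: card_eq_trans (Sinf_Q m) (Q_card m). Qed.
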